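(* Let $n\ge 2$ and let $G$ be the graph obtained from the complete graph $K_n$ by adding, for each edge $e$ of $K_n$, a new vertex $v_e$ adjacent exactly to the two endpoints of $e$. Then $G$ is well-bicovered.
   Context: All graphs are finite and simple; ''subgraph'' means induced subgraph. A graph is well-bicovered if every vertex-inclusion-maximal induced bipartite subgraph has the same order. *)

(* Defs.v *)
From mathcomp Require Import all_boot.
Set Implicit Arguments. Unset Strict Implicit. Unset Printing Implicit Defensive.

(* A finite simple graph: vertex finType T with adjacency relation e,
   assumed symmetric and irreflexive where needed. *)

Definition independent (T : finType) (e : rel T) (S : {set T}) : Prop :=
  forall x y, x \in S -> y \in S -> ~~ e x y.

Definition induces_bipartite (T : finType) (e : rel T) (S : {set T}) : Prop :=
  exists A B : {set T},
    [/\ A :|: B = S, A :&: B = set0, independent e A & independent e B].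

Definition maximal_bipartite (T : finType) (e : rel T) (S : {set T}) : Prop :=
  induces_bipartite e S /\
  forall S' : {set T}, S \subset S' -> induces_bipartite e S' -> S' = S.

Definition well_bicovered (T : finType) (e : rel T) : Prop :=
  forall S1 S2 : {set T}, maximal_bipartite e S1 -> maximal_bipartite e S2 ->
    #|S1| = #|S2|.

Definition Kedge (n : nat) := {p : 'I_n * 'I_n | p.1 < p.2}.

(* Vertices of G: the original vertices of K_n (inl) and one new vertex v_e
   per edge e of K_n (inr). *)
Definition KnSubdivVert (n : nat) : finType := ('I_n + Kedge n)%type.

Definition KnSubdivAdj (n : nat) : rel (KnSubdivVert n) :=
  fun x y =>
    match x, y with
    | inl i, inl j => i != j
    | inl i, inr p => (i == (val p).1) || (i == (val p).2)
    | inr p, inl i => (i == (val p).1) || (i == (val p).2)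
    | inr _, inr _ => false
    end.

(* Main.v *)
Require Import Defs.
From mathcomp Require Import all_boot.
Set Implicit Arguments. Unset Strict Implicit. Unset Printing Implicit Defensive.

Lemma card_sumset (T1 T2 : finType) (S : {set (T1 + T2)%type}) :
  #|S| = #|[set i | inl i \in S]| + #|[set j | inr j \in S]|.
Proof.
rewrite -!sum1_card big_sumType /=.
congr (_ + _); apply: eq_bigl => i; by rewrite inE.
Qed.

Lemma maxv (T : finType) (e : rel T) S v :
  maximal_bipartite e S -> induces_bipartite e (v |: S) -> v \in S.
Proof.
move=> [_ mx] h; have := mx _ (subsetUr _ _) h => <-; by rewrite setU11.
Qed.

Lemma tri (T : finType) (e : rel T) S x y z :
  induces_bipartite e S -> x \in S -> y \in S -> z \in S ->
  e x y -> e y z -> e x z -> False.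
Proof.
move=> [A [B [<- _ iA iB]]].
rewrite !inE => /orP[] hx /orP[] hy /orP[] hz exy eyz exz.
- by move: (iA _ _ hx hy); rewrite exy.
- by move: (iA _ _ hx hy); rewrite exy.
- by move: (iA _ _ hx hz); rewrite exz.
- by move: (iB _ _ hy hz); rewrite eyz.
- by move: (iA _ _ hy hz); rewrite eyz.
- by move: (iB _ _ hx hz); rewrite exz.
- by move: (iB _ _ hx hy); rewrite exy.
- by move: (iB _ _ hx hy); rewrite exy.
Qed.

Definition ine n (i : 'I_n) (q : Kedge n) := (i == (val q).1) || (i == (val q).2).

Lemma edge_uniq n (a b : 'I_n) (lt : a < b) (q : Kedge n) :
  ine a q -> ine b q -> q = Sub (a, b) lt.
Proof.
move=> ha hb; apply: val_inj => /=; move: ha hb.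
case: q => [[q1 q2] /= lq]; rewrite /ine /= => /orP[]/eqP ea /orP[]/eqP eb; subst.
- by move: lt; rewrite ltnn.
- by [].
- by move: (ltn_trans lt lq); rewrite ltnn.
- by move: lt; rewrite ltnn.
Qed.

Lemma main_card n (hn : 2 <= n) S :
  maximal_bipartite (@KnSubdivAdj n) S -> #|S| = #|{: {p : 'I_n * 'I_n | p.1 < p.2}}|.+1.
Proof.
move=> mS; have bip := mS.1.
have addv := @maxv _ _ _ ^~ mS.
have trS := @tri _ _ _ _ _ _ bip.
rewrite card_sumset.
set O := [set i | inl i \in S]; set E := [set p | inr p \in S].
have Oi : forall i, (i \in O) = (inl i \in S) by move=> i; rewrite inE.
have Ei : forall p, (p \in E) = (inr p \in S) by move=> p; rewrite inE.
have [a aO] : exists a, a \in O.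
{   case: (set_0Vmem O) => [O0|[x hx]]; last by exists x.
  have i0 : 'I_n := Ordinal (leq_trans (isT : 0 < 2) hn).
  have nS : inl i0 \notin S.
    apply/negP => h; have : i0 \in O by rewrite inE.
    by rewrite O0 inE.
  suff : inl i0 \in S by rewrite (negPf nS).
  apply: addv. exists [set inl i0], S. split => //.
  - apply/setP => x; rewrite !inE; apply/andP => -[/eqP-> h]; by rewrite h in nS.
  - by move=> x y; rewrite !inE => /eqP-> /eqP->; rewrite /= eqxx.
  - move=> x y hx hy; case: x hx => [i|p] hx.
      by move: hx; rewrite -Oi O0 inE.
    case: y hy => [j|q] hy //.
    by move: hy; rewrite -Oi O0 inE. }
case: (boolP [exists b, (b \in O) && (b != a)]) => [/existsP [b /andP [bO nba]] | nex].
- have Oab : O = [set a; b].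
    apply/setP => c; rewrite !inE. apply/idP/idP.
    + move=> cS.
      case: (eqVneq c a) => [_|nca]; first by [].
      case: (eqVneq c b) => [_|ncb]; first by rewrite orbT. exfalso.
      have cO : c \in O by rewrite Oi.
      apply: (trS (inl a) (inl b) (inl c)); rewrite -?Oi //=.
      * by rewrite eq_sym.
      * by rewrite eq_sym.
      * by rewrite eq_sym.
    + by move=> /orP[]/eqP->; rewrite -Oi.
  have nab : a != b by rewrite eq_sym.
  clear nba.
  wlog lt : a b aO bO nab Oab / a < b.
    move=> H; case: (ltngtP a b) => [l|l|e].
    * exact: (H a b).
    * apply: (H b a) => //; first by rewrite eq_sym.
      by rewrite Oab setUC.
    * by move: nab; rewrite (val_inj e) eqxx.
  pose p0 : Kedge n := Sub (a, b) lt.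
  have np0 : inr p0 \notin S.
    apply/negP => h; apply: (trS (inl a) (inl b) (inr p0)); rewrite -?Oi //=.
    * by rewrite eqxx orbT.
    * by rewrite eqxx.
  have Ob : forall i, inl i \in S -> i != a -> i = b.
    by move=> i; rewrite -Oi Oab !inE => /orP[]/eqP-> //; rewrite eqxx.
  have EC : E = [set~ p0].
    apply/setP => p; rewrite !inE; apply/idP/idP.
    + by move=> h; apply/negP => /eqP e; rewrite -e h in np0.
    + move=> npp.
      pose Pa (x : KnSubdivVert n) := match x with inl i => i == a | inr q => ~~ ine a q end.
      apply: addv.
      exists ((inr p |: S) :&: [set x | Pa x]), ((inr p |: S) :\: [set x | Pa x]).
      split.
      * by rewrite setID.
      * by rewrite setDE setIACA setICr setI0.
      * move=> [i|q] [j|r]; rewrite !inE /=.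
        -- by move=> /andP[_ /eqP->] /andP[_ /eqP->]; rewrite eqxx.
        -- by move=> /andP[_ /eqP->] /andP[_ h].
        -- by move=> /andP[_ h] /andP[_ /eqP->].
        -- by [].
      * move=> [i|q] [j|r]; rewrite !inE /=.
        -- move=> /andP[h1 h2] /andP[h3 h4].
           by rewrite (Ob _ h2 h1) (Ob _ h4 h3) eqxx.
        -- move=> /andP[h1 h2] /andP[h3 h4]; rewrite negbK in h3.
           rewrite (Ob _ h2 h1); apply/negP => h5.
           have e := edge_uniq lt h3 h5. rewrite -/p0 in e; subst r.
           case/orP: h4 => [/eqP e|]; last by rewrite (negPf np0).
           by case: e => e; rewrite e eqxx in npp.
        -- move=> /andP[h3 h4] /andP[h1 h2]; rewrite negbK in h3.
           rewrite (Ob _ h2 h1); apply/negP => h5.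
           have e := edge_uniq lt h3 h5. rewrite -/p0 in e; subst q.
           case/orP: h4 => [/eqP e|]; last by rewrite (negPf np0).
           by case: e => e; rewrite e eqxx in npp.
        -- by [].
  have pos : 0 < #|{: {p : 'I_n * 'I_n | p.1 < p.2}}| by apply/card_gt0P; exists p0.
  rewrite Oab cards2 nab EC cardsC1.
  by case: #|_| pos.
- have Oa : forall i, inl i \in S -> i = a.
    move=> i h; apply/eqP; apply: contraNT nex => nia; apply/existsP; exists i.
    by rewrite Oi h nia.
  have O1 : O = [set a].
    by apply/setP => i; rewrite !inE; apply/idP/eqP => [/Oa|->] //; rewrite -Oi.
  have ET : E = setT.
    apply/setP => p; rewrite !inE; apply: addv.
    exists [set inl a], ((inr p |: S) :\ inl a); split.
    + by rewrite setD1K // !inE -Oi aO orbT.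
    + by apply/setP => x; rewrite !inE; case: (x == inl a).
    + by move=> x y; rewrite !inE => /eqP-> /eqP->; rewrite /= eqxx.
    + move=> [i|q] [j|r]; rewrite !inE //=.
      * by move=> /andP[nia /Oa e]; rewrite e eqxx in nia.
      * by move=> /andP[nia /Oa e]; rewrite e eqxx in nia.
      * by move=> _ /andP[nia /Oa e]; rewrite e eqxx in nia.
  by rewrite O1 ET cards1 cardsT.
Qed.

Theorem mainTheorem13 (n : nat) (hn : 2 <= n) :
  well_bicovered (@KnSubdivAdj n).
Proof.
by move=> S1 S2 h1 h2; rewrite (main_card hn h1) (main_card hn h2).
Qed.
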